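(* For positive scores $0<s_1\le s_2\le\dots\le s_n$ and integer budget $B\ge1$, the output $\mathbf h=\mathrm{RAS}(s_1,\dots,s_n;B)$ belongs to $\mathcal A$ and satisfies $\mathbf h\in\arg\min_{\mathbf a\in\mathcal A}\|\mathbf a\odot\mathbf s\|_\infty$.
   Context: $\mathcal A=\{\mathbf a\in\mathbb N^n:\|\mathbf a\|_1=B\}$ ($\mathbb N$ includes $0$); $\odot$ is the entrywise product and $\mathbf e_i$ the $i$-th unit vector. RAS$(s_1,\dots,s_n;B)$ with sorted scores $s_1\le\dots\le s_n$: if $B=1$ return $\mathbf e_1$. Otherwise let $\mathbf a=\mathrm{RAS}(s_1,\dots,s_n;B-1)$; let $r=\min\{i:a_i=0\}$ if $a_n=0$, else $r=n$; let $M=\arg\min_{i\in[r]}\|(\mathbf a+\mathbf e_i)\odot\mathbf s\|_\infty$; choose any $j\in M$ minimizing the cardinality of $\arg\max_{i\in[r]}(a_i+e_{j,i})s_i$; return $\mathbf a+\mathbf e_j$. *)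

(* Defs.v *)
From mathcomp Require Import all_boot all_order all_algebra.
Set Implicit Arguments. Unset Strict Implicit. Unset Printing Implicit Defensive.
Import Order.TTheory GRing.Theory Num.Theory.
Local Open Scope ring_scope.

(* Allocations are vectors in N^n, indexed 0-based by 'I_n
   (paper index i corresponds to ordinal with value i-1). *)
Notation alloc n := {ffun 'I_n -> nat}.

Definition unitv (n : nat) (i : 'I_n) : alloc n :=
  [ffun k => (k == i : nat)].

Definition e1 (n : nat) : alloc n := [ffun k : 'I_n => (val k == 0%N : nat)].

Definition addv (n : nat) (a b : alloc n) : alloc n := [ffun k => (a k + b k)%N].

(* ||a (.) s||_oo  (all entries are nonnegative for nonnegative s) *)
Definition inf_norm (R : realFieldType) (n : nat) (s : 'I_n -> R) (a : alloc n) : R :=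
  \big[Num.max/0]_(i < n) ((a i)%:R * s i).

(* r : if a_n = 0 then min{i : a_i = 0} (1-based), else n *)
Definition rval (n : nat) (a : alloc n) : nat :=
  if [exists i : 'I_n, (val i == n.-1) && (a i == 0%N)]
  then (find (fun i : 'I_n => a i == 0%N) (enum 'I_n)).+1
  else n.

(* i \in [r] (1-based), i.e. 0-based value < r *)
Definition inr (n : nat) (a : alloc n) (i : 'I_n) : bool := (val i < rval a)%N.

Definition inM (R : realFieldType) (n : nat) (s : 'I_n -> R) (a : alloc n) (j : 'I_n) : Prop :=
  inr a j /\ forall i : 'I_n, inr a i ->
    inf_norm s (addv a (unitv j)) <= inf_norm s (addv a (unitv i)).

Definition argmax_card (R : realFieldType) (n : nat) (s : 'I_n -> R) (a : alloc n) (j : 'I_n) : nat :=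
  let b := addv a (unitv j) in
  #|[set i : 'I_n | inr a i &&
      ((b i)%:R * s i == \big[Num.max/0]_(k < n | inr a k) ((b k)%:R * s k))]|.

(* RAS as a relation: RAS s B h  <->  h is a possible output of RAS(s_1..s_n; B)
   (the algorithm allows an arbitrary choice among tied j's). *)
Inductive RAS (R : realFieldType) (n : nat) (s : 'I_n -> R) : nat -> alloc n -> Prop :=
| RAS_one : RAS s 1 (e1 n)
| RAS_step (B : nat) (a : alloc n) (j : 'I_n) :
    RAS s B.+1 a ->
    inM s a j ->
    (forall j' : 'I_n, inM s a j' -> (argmax_card s a j <= argmax_card s a j')%N) ->
    RAS s B.+2 (addv a (unitv j)).

(* Main.v *)
Require Import Defs.
From mathcomp Require Import all_boot all_order all_algebra.
Import Order.TTheory GRing.Theory Num.Theory.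
Local Open Scope ring_scope.
Set Implicit Arguments. Unset Strict Implicit.

Section H.
Variables (R : realFieldType) (n : nat) (s : 'I_n -> R).
Hypothesis hpos : forall i : 'I_n, 0 < s i.

Lemma norm_leP (a : alloc n) (T : R) : 0 <= T ->
  (forall k, (a k)%:R * s k <= T) -> inf_norm s a <= T.
Proof.
move=> T0 H; rewrite /inf_norm; apply: (big_ind (fun x => x <= T)) => //.
by move=> x y hx hy; rewrite ge_max hx hy.
Qed.

Lemma le_normP (a : alloc n) k : (a k)%:R * s k <= inf_norm s a.
Proof. by rewrite /inf_norm (bigD1 k) //= le_max lexx. Qed.

Lemma norm_ge0 (a : alloc n) : 0 <= inf_norm s a.
Proof.
rewrite /inf_norm; apply: (big_ind (fun x => 0 <= x)); first by []. 2: by move=> i _; apply: mulr_ge0; [exact: ler0n|exact: ltW].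
by move=> x y hx hy; rewrite le_max hx orTb.
Qed.

Lemma norm_add (a : alloc n) i T : inf_norm s a <= T ->
  (a i).+1%:R * s i <= T -> inf_norm s (Defs.addv a (unitv i)) <= T.
Proof.
move=> ha hi; apply: norm_leP; first exact: le_trans (norm_ge0 a) ha.
move=> k; rewrite !ffunE; case: (eqVneq k i) => [->|ne] /=.
  by rewrite addn1.
by rewrite addn0; apply: le_trans (le_normP a k) ha.
Qed.

Lemma norm_mono (a b : alloc n) : (forall k, (a k <= b k)%N) ->
  inf_norm s a <= inf_norm s b.
Proof.
move=> H; apply: norm_leP; first exact: norm_ge0.
move=> k; apply: le_trans (le_normP b k).
by apply: ler_wpM2r; [exact: ltW | rewrite ler_nat].
Qed.
End H.

Lemma sum_ind n (i : 'I_n) : (\sum_(k < n) (k == i : nat))%N = 1%N.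
Proof.
rewrite (bigD1 i) //= eqxx big1 // => k /negbTE -> //.
Qed.

Lemma sum_addv n (a : alloc n) j :
  (\sum_(k < n) Defs.addv a (unitv j) k = (\sum_(k < n) a k).+1)%N.
Proof.
under eq_bigr => k _ do rewrite !ffunE.
by rewrite big_split /= sum_ind addn1.
Qed.

Lemma exists_lt n (F G : 'I_n -> nat) :
  (\sum_(k < n) F k < \sum_(k < n) G k)%N -> exists i, (F i < G i)%N.
Proof.
move=> H; case: (pickP (fun i => F i < G i)%N) => [i hi|N]; first by exists i.
exfalso; have : (\sum_(k < n) G k <= \sum_(k < n) F k)%N.
  by apply: leq_sum => k _; move: (N k) => /= /negbT; rewrite -leqNgt.
by rewrite leqNgt H.
Qed.

Lemma not_inr n (a : alloc n) (i : 'I_n) : ~~ inr a i ->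
  exists r0 : 'I_n, [/\ a r0 = 0%N, inr a r0 & (val r0 < val i)%N].
Proof.
rewrite /inr /rval; case: ifP; last by rewrite ltn_ord.
move=> /existsP [l /andP [_ /eqP al]] hi.
have hh : has (fun i : 'I_n => a i == 0%N) (enum 'I_n).
  by apply/hasP; exists l; [rewrite mem_enum | rewrite al].
have := nth_find l hh; move: hh; rewrite has_find size_enum_ord => hlt /eqP hz.
set r0 := nth l (enum 'I_n) (find (fun i : 'I_n => a i == 0%N) (enum 'I_n)).
have vr : val r0 = find (fun i : 'I_n => a i == 0%N) (enum 'I_n) by have := nth_enum_ord l hlt; rewrite /r0.
exists r0; rewrite vr; split => //; by rewrite ltnNge.
Qed.

Theorem lemmaC2 (R : realFieldType) (n : nat) (s : 'I_n -> R)
  (hn : (0 < n)%N)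
  (hpos : forall i : 'I_n, 0 < s i)
  (hsorted : forall i j : 'I_n, (i <= j)%N -> s i <= s j)
  (B : nat) (hB : (1 <= B)%N) (h : {ffun 'I_n -> nat}) :
  RAS s B h ->
  (\sum_(i < n) h i)%N = B /\
  forall a : {ffun 'I_n -> nat}, (\sum_(i < n) a i)%N = B ->
    inf_norm s h <= inf_norm s a.
Proof.
move=> hR; clear hB; elim: hR => [|B' a j hR [IHs IHn] [hjr hjM] _].
- set o := Ordinal hn.
  have e1E : forall k : 'I_n, e1 n k = (k == o : nat).
    by move=> k; rewrite ffunE; congr (nat_of_bool _); apply/eqP/eqP => [h0|->] //; apply: val_inj.
  split.
    by under eq_bigr => k _ do rewrite e1E; rewrite sum_ind.
  move=> b hb.
  have [i hi] : exists i, ((fun _ : 'I_n => 0%N) i < b i)%N.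
    by apply: exists_lt; rewrite hb big1.
  apply: norm_leP.
    by apply: norm_ge0.
  move=> k; rewrite e1E; case: (eqVneq k o) => [->|ne] /=.
    rewrite mul1r; apply: le_trans (le_normP s b i).
    apply: le_trans (hsorted o i (leq0n _)) _.
    by rewrite -{1}(mul1r (s i)); apply: ler_wpM2r; [exact: ltW | rewrite ler1n].
  by rewrite mul0r; apply: le_trans (le_normP s b i); apply: mulr_ge0; [exact: ler0n|exact: ltW].
- split; first by rewrite sum_addv IHs.
  move=> b hb.
  have [i hi] : exists i, (a i < b i)%N by apply: exists_lt; rewrite IHs hb.
  set b' : alloc n := [ffun k => (b k - (k == i))%N].
  have hb' : (\sum_(k < n) b' k)%N = B'.+1.
    have e : (\sum_(k < n) b k = \sum_(k < n) b' k + \sum_(k < n) (k == i : nat))%N.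
      rewrite -big_split /=; apply: eq_bigr => k _; rewrite ffunE subnK //.
    case: eqP => [->|_]; [exact: leq_ltn_trans hi | by []].
    by move: hb; rewrite e sum_ind addn1 => /eqP; rewrite eqSS => /eqP.
  have na : inf_norm s a <= inf_norm s b.
    apply: le_trans (IHn _ hb') _; apply: norm_mono => // k.
    by rewrite ffunE leq_subr.
  have hib : (a i).+1%:R * s i <= inf_norm s b.
    apply: le_trans (le_normP s b i).
    by apply: ler_wpM2r; [exact: ltW | rewrite ler_nat].
  case hir: (inr a i).
    by apply: le_trans (hjM i hir) _; exact: norm_add.
  have [r0 [ar0 rin rlt]] := not_inr (negbT hir).
  apply: le_trans (hjM r0 rin) _; apply: norm_add => //.
  apply: le_trans hib; rewrite ar0 mul1r.
  apply: le_trans (hsorted r0 i (ltnW rlt)) _.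
  by rewrite -{1}(mul1r (s i)); apply: ler_wpM2r; [exact: ltW | rewrite ler1n].
Qed.
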